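(* For $n\in\mathbb{N}$ and $0<x<1$, let $A(n,x)=(-1)^{n+1}\sum_{m=1}^{\infty}\cos(2\pi m x)\sum_{r=0}^{n-1}\frac{(n+r)!}{(n-r-1)!}\frac{1}{(2\pi m)^{2r+2}}$. Then \[ A(n,x)=(-1)^{n}\pi\sum_{m=1}^{\infty}Y_{2n}(4\pi m)\cos(2\pi m x)+(-1)^{n+1}\sum_{m=1}^{\infty}\Big\{2(\gamma+\log(2\pi m))J_{2n}(4\pi m)+P_{2n}(4\pi m)-2Q_{2n}(4\pi m)\Big\}\cos(2\pi m x), \] both series on the right converging.
   Context: $\gamma$ is Euler's constant, $\psi=\Gamma'/\Gamma$, $J_k$ and $Y_k$ are the Bessel functions of the first and second kind of integer order $k$. For $k\in\mathbb{N}$ and $z>0$, $P_{k}(z)=-\sum_{\lceil k/2\rceil\le r\le k-1}\frac{(k-r-1)!}{r!}\left(\frac z2\right)^{2r-k}+\sum_{\ell=0}^{\infty}(-1)^{\ell}\left(\frac z2\right)^{k+2\ell}\frac{\psi(k+\ell+1)-\psi(\ell+1)}{\ell!\,(k+\ell)!}$ and $Q_{k}(z)=\sum_{\ell=0}^{\infty}(-1)^{\ell}\left(\frac z2\right)^{k+2\ell}\frac{\psi(k+\ell+1)+\gamma}{\ell!\,(k+\ell)!}$. *)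

(* Defs.v *)
From Stdlib Require Import Reals Lra Lia ClassicalEpsilon Factorial.
Open Scope R_scope.

(* Sum of a convergent series sum_{j>=0} a j (arbitrary value if divergent). *)
Definition series_sum (a : nat -> R) : R :=
  epsilon (inhabits 0) (fun l => infinite_sum a l).

Fixpoint rsum (f : nat -> R) (n : nat) : R :=
  match n with O => 0 | S k => rsum f k + f k end.

(* sum_{a <= r <= b} f r  (empty if b < a) *)
Definition rsum_range (f : nat -> R) (a b : nat) : R :=
  rsum (fun i => f (a + i)%nat) (S b - a).

Definition harmonic (N : nat) : R := rsum (fun j => / INR (S j)) N.

Definition euler_gamma : R :=
  epsilon (inhabits 0) (fun g => Un_cv (fun N => harmonic N - ln (INR N)) g).

(* digamma function psi = Gamma'/Gamma for s > 0, via the standard series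
   psi(s) = -gamma + sum_{j>=0} (1/(j+1) - 1/(j+s)) *)
Definition digamma (s : R) : R :=
  - euler_gamma + series_sum (fun j => / (INR j + 1) - / (INR j + s)).

Definition besselJ (k : nat) (z : R) : R :=
  series_sum (fun l => (-1) ^ l * (z / 2) ^ (k + 2 * l)
                       / (INR (fact l) * INR (fact (k + l)))).

(* Bessel function of the second kind of integer order k, z > 0 (DLMF 10.8.1) *)
Definition besselY (k : nat) (z : R) : R :=
  - (/ PI) * rsum (fun r => INR (fact (k - r - 1)) / INR (fact r)
                             * (z / 2) ^ (2 * r) / (z / 2) ^ k) k
  + (2 / PI) * ln (z / 2) * besselJ k z
  - (/ PI) * series_sum (fun l => (-1) ^ l * (z / 2) ^ (k + 2 * l)
                       * (digamma (INR l + 1) + digamma (INR (k + l) + 1))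
                       / (INR (fact l) * INR (fact (k + l)))).

(* P_k(z) as in the paper; (z/2)^(2r-k) written as (z/2)^(2r)/(z/2)^k *)
Definition P_fun (k : nat) (z : R) : R :=
  - rsum_range (fun r => INR (fact (k - r - 1)) / INR (fact r)
                          * (z / 2) ^ (2 * r) / (z / 2) ^ k)
               ((k + 1) / 2) (k - 1)
  + series_sum (fun l => (-1) ^ l * (z / 2) ^ (k + 2 * l)
                 * (digamma (INR (k + l) + 1) - digamma (INR l + 1))
                 / (INR (fact l) * INR (fact (k + l)))).

Definition Q_fun (k : nat) (z : R) : R :=
  series_sum (fun l => (-1) ^ l * (z / 2) ^ (k + 2 * l)
                 * (digamma (INR (k + l) + 1) + euler_gamma)
                 / (INR (fact l) * INR (fact (k + l)))).

(* m-th term (m >= 1) of the series defining A(n,x) *)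
Definition A_term (n : nat) (x : R) (m : nat) : R :=
  (-1) ^ (n + 1) * cos (2 * PI * INR m * x)
  * rsum (fun r => INR (fact (n + r)) / INR (fact (n - r - 1))
                   / (2 * PI * INR m) ^ (2 * r + 2)) n.

(* Main.v *)
Require Import Defs.
From Stdlib Require Import Reals Lra Lia ClassicalEpsilon Factorial.
From Coquelicot Require Import Coquelicot.
Open Scope R_scope.

Lemma series_sum_eq a l : infinite_sum a l -> series_sum a = l.
Proof.
  intro H. unfold series_sum.
  pose proof (epsilon_spec (inhabits 0) (fun l => infinite_sum a l) (ex_intro _ l H)) as H'.
  eapply uniqueness_sum; eauto.
Qed.

Lemma series_sum_Series a : ex_series a -> series_sum a = Series a.
Proof.
  intro H. apply series_sum_eq. apply is_series_Reals. now apply Series_correct.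
Qed.

Lemma sum_n_rsum a N : sum_n a N = rsum a (S N).
Proof.
  induction N. - rewrite sum_O. simpl. symmetry. apply Rplus_0_l.
  - rewrite sum_Sn, IHN. simpl. reflexivity.
Qed.

Lemma harmonic_S N : harmonic (S N) = harmonic N + / INR (S N).
Proof. reflexivity. Qed.

Lemma harmonic_ge0 N : 0 <= harmonic N.
Proof.
  induction N. unfold harmonic; simpl; lra. rewrite harmonic_S.
  assert (0 < / INR (S N)) by (apply Rinv_0_lt_compat, lt_0_INR; lia). lra.
Qed.

Lemma harmonic_le N : harmonic N <= INR N.
Proof.
  induction N. unfold harmonic; simpl; lra. rewrite harmonic_S, S_INR.
  assert (/ (INR N + 1) <= 1). { pose proof (pos_INR N).
   apply (Rmult_le_reg_r (INR N + 1)); try lra. rewrite Rinv_l; lra. }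
  lra.
Qed.

Lemma harmonic_shift_le N l : 0 <= harmonic (N + l) - harmonic N <= INR l / INR (S N).
Proof.
  induction l.
  - rewrite Nat.add_0_r. simpl INR. unfold Rdiv. lra.
  - rewrite Nat.add_succ_r, harmonic_S, (S_INR l).
    assert (0 < / INR (S (N + l))) by (apply Rinv_0_lt_compat, lt_0_INR; lia).
    assert (/ INR (S (N + l)) <= / INR (S N)).
    { apply Rinv_le_contravar. apply lt_0_INR; lia. apply le_INR; lia. }
    unfold Rdiv in *. lra.
Qed.

Lemma lim_inv_S : is_lim_seq (fun N => / INR (S N)) 0.
Proof.
  replace (Finite 0) with (Rbar_inv p_infty) by reflexivity.
  apply (is_lim_seq_inv (fun N => INR (S N))). 2: discriminate.
  apply (is_lim_seq_incr_1 INR). apply is_lim_seq_INR.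
Qed.

Lemma lim_inv_S2 : is_lim_seq (fun N => / INR (S (S N))) 0.
Proof. apply (is_lim_seq_incr_1 (fun N => / INR (S N))). apply lim_inv_S. Qed.

Lemma digamma_partial l M : rsum (fun j => / (INR j + 1) - / (INR j + (INR l + 1))) M
   = harmonic l - (harmonic (M + l) - harmonic M).
Proof.
  induction M as [|M IH].
  - simpl. unfold harmonic at 3. simpl. ring.
  - simpl rsum. rewrite IH. simpl (S M + l)%nat. rewrite !harmonic_S.
    rewrite !S_INR, plus_INR. field. split; pose proof (pos_INR M); pose proof (pos_INR l); lra.
Qed.

Lemma digamma_nat l : digamma (INR l + 1) = - euler_gamma + harmonic l.
Proof.
  unfold digamma. f_equal. apply series_sum_eq. apply is_series_Reals.
  cut (is_lim_seq (sum_n (fun j => / (INR j + 1) - / (INR j + (INR l + 1)))) (harmonic l)).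
  { intro H; exact H. }
  apply (is_lim_seq_ext (fun N => harmonic l - (harmonic (S N + l) - harmonic (S N)))).
  - intro N. rewrite sum_n_rsum. symmetry. apply digamma_partial.
  - replace (Finite (harmonic l)) with (Rbar_minus (harmonic l) 0) by (simpl; f_equal; ring).
    apply is_lim_seq_minus'. apply is_lim_seq_const.
    apply (is_lim_seq_le_le (fun _ => 0) _ (fun N => INR l / INR (S (S N)))).
    + intro N. apply harmonic_shift_le.
    + apply is_lim_seq_const.
    + replace (Finite 0) with (Rbar_mult (INR l) (Finite 0)) by (simpl; f_equal; ring).
      apply (is_lim_seq_ext (fun N => INR l * / INR (S (S N)))). intro; unfold Rdiv; ring.
      apply is_lim_seq_scal_l. apply lim_inv_S2.
Qed.

Lemma ratio_lim (a : nat -> R) C :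
  (forall n, Rabs (a (S n) / a n) <= C / INR (S n)) ->
  is_lim_seq (fun n => Rabs (a (S n) / a n)) 0.
Proof.
  intro H. apply (is_lim_seq_le_le (fun _ => 0) _ (fun n => C * / INR (S n))).
  - intro n. split. apply Rabs_pos. apply H.
  - apply is_lim_seq_const.
  - replace (Finite 0) with (Rbar_mult C (Finite 0)) by (simpl; f_equal; ring).
    apply is_lim_seq_scal_l. apply lim_inv_S.
Qed.

Lemma ratio_CV (a : nat -> R) C :
  (forall n, a n <> 0) ->
  (forall n, Rabs (a (S n) / a n) <= C / INR (S n)) ->
  CV_radius a = p_infty.
Proof.
  intros Hn H. apply CV_radius_infinite_DAlembert; auto. eapply ratio_lim; eauto.
Qed.

Lemma ratio_disk (a : nat -> R) C x :
  (forall n, a n <> 0) ->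
  (forall n, Rabs (a (S n) / a n) <= C / INR (S n)) ->
  ex_series (fun n => Rabs (a n * x ^ n)).
Proof.
  intros Hn H. apply (CV_disk_DAlembert a x 0); auto. eapply ratio_lim; eauto.
Qed.

Definition phi (k l : nat) : R := (-1) ^ l / (INR (fact l) * INR (fact (k + l))).
Definition chi (k l : nat) : R := phi k l * (harmonic l + harmonic (k + l)).

Lemma INR_fact_pos n : 0 < INR (fact n).
Proof. apply lt_0_INR. apply lt_O_fact. Qed.

Lemma phi_neq0 k l : phi k l <> 0.
Proof.
  unfold phi. pose proof (INR_fact_pos l). pose proof (INR_fact_pos (k+l)).
  apply Rmult_integral_contrapositive. split. apply pow_nonzero. lra.
  apply Rinv_neq_0_compat. nra.
Qed.

Lemma phi_S k l : phi k (S l) = - phi k l / (INR (S l) * INR (S (k + l))).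
Proof.
  unfold phi. rewrite Nat.add_succ_r, !fact_simpl, !mult_INR. simpl pow.
  pose proof (INR_fact_pos l). pose proof (INR_fact_pos (k+l)).
  field. repeat split; try lra; apply not_0_INR; lia.
Qed.

Lemma phi_ratio k l : Rabs (phi k (S l) / phi k l) <= 1 / INR (S l).
Proof.
  rewrite phi_S. pose proof (phi_neq0 k l).
  replace (- phi k l / (INR (S l) * INR (S (k + l))) / phi k l)
    with (- / (INR (S l) * INR (S (k + l)))) by (field; repeat split; try assumption; apply not_0_INR; lia).
  rewrite Rabs_Ropp. rewrite Rabs_right.
  2: { apply Rle_ge, Rlt_le, Rinv_0_lt_compat. apply Rmult_lt_0_compat; apply lt_0_INR; lia. }
  rewrite Rinv_mult. unfold Rdiv. rewrite Rmult_1_l.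
  assert (1 <= INR (S (k + l))) by (apply (le_INR 1); lia).
  assert (0 < / INR (S l)) by (apply Rinv_0_lt_compat, lt_0_INR; lia).
  assert (/ INR (S (k + l)) <= 1).
  { rewrite <- Rinv_1. apply Rinv_le_contravar; lra. }
  assert (0 < / INR (S (k + l))) by (apply Rinv_0_lt_compat; lra).
  nra.
Qed.

Lemma harmonic_ge1 N : (1 <= N)%nat -> 1 <= harmonic N.
Proof.
  intro H. induction H.
  - unfold harmonic. simpl. lra.
  - rewrite harmonic_S. assert (0 < / INR (S m)) by (apply Rinv_0_lt_compat, lt_0_INR; lia). lra.
Qed.

Lemma inv_S_le1 m : / INR (S m) <= 1.
Proof.
  rewrite S_INR. pose proof (pos_INR m). rewrite <- Rinv_1.
  apply Rinv_le_contravar; lra.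
Qed.

Lemma chi_neq0 k l : (1 <= k)%nat -> chi k l <> 0.
Proof.
  intro Hk. unfold chi. apply Rmult_integral_contrapositive. split. apply phi_neq0.
  pose proof (harmonic_ge0 l). pose proof (harmonic_ge1 (k+l) ltac:(lia)). lra.
Qed.

Lemma chi_ratio k l : (1 <= k)%nat -> Rabs (chi k (S l) / chi k l) <= 3 / INR (S l).
Proof.
  intro Hk. unfold chi.
  pose proof (harmonic_ge0 l). pose proof (harmonic_ge1 (k+l) ltac:(lia)).
  pose proof (phi_neq0 k l).
  replace (phi k (S l) * (harmonic (S l) + harmonic (k + S l)) / (phi k l * (harmonic l + harmonic (k + l))))
    with ((phi k (S l) / phi k l) * ((harmonic (S l) + harmonic (k + S l)) / (harmonic l + harmonic (k + l))))
    by (field; split; lra).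
  rewrite Rabs_mult. pose proof (phi_ratio k l).
  rewrite Nat.add_succ_r, !harmonic_S.
  pose proof (inv_S_le1 l). pose proof (inv_S_le1 (k+l)).
  assert (0 < / INR (S l)) by (apply Rinv_0_lt_compat, lt_0_INR; lia).
  assert (0 < / INR (S (k+l))) by (apply Rinv_0_lt_compat, lt_0_INR; lia).
  rewrite (Rabs_right ((harmonic l + / INR (S l) + (harmonic (k + l) + / INR (S (k + l)))) / (harmonic l + harmonic (k + l)))).
  2: { apply Rle_ge. apply Rdiv_le_0_compat; lra. }
  assert ((harmonic l + / INR (S l) + (harmonic (k + l) + / INR (S (k + l)))) / (harmonic l + harmonic (k + l)) <= 3).
  { apply (Rmult_le_reg_r (harmonic l + harmonic (k + l))). lra.
    unfold Rdiv. rewrite Rmult_assoc, Rinv_l by lra. lra. }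
  pose proof (Rabs_pos (phi k (S l) / phi k l)).
  assert (0 <= (harmonic l + / INR (S l) + (harmonic (k + l) + / INR (S (k + l)))) / (harmonic l + harmonic (k + l))).
  { apply Rdiv_le_0_compat; lra. }
  unfold Rdiv in *. nra.
Qed.

Lemma phi_CV k : CV_radius (phi k) = p_infty.
Proof. apply (ratio_CV _ 1). apply phi_neq0. intro; apply phi_ratio. Qed.

Lemma chi_CV k : (1 <= k)%nat -> CV_radius (chi k) = p_infty.
Proof. intro. apply (ratio_CV _ 3). intro; apply chi_neq0; auto. intro; apply chi_ratio; auto. Qed.

Lemma inside_inf a x : CV_radius a = p_infty -> Rbar_lt (Rabs x) (CV_radius a).
Proof. intro H; rewrite H; simpl; auto. Qed.

Lemma phi_abs k x : ex_series (fun n => Rabs (phi k n * x ^ n)).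
Proof. apply (ratio_disk _ 1). apply phi_neq0. intro; apply phi_ratio. Qed.

Lemma chi_abs k x : (1 <= k)%nat -> ex_series (fun n => Rabs (chi k n * x ^ n)).
Proof. intro. apply (ratio_disk _ 3). intro; apply chi_neq0; auto. intro; apply chi_ratio; auto. Qed.

Lemma infinite_sum_ext a b l : (forall n, a n = b n) -> infinite_sum a l -> infinite_sum b l.
Proof.
  intros H H1. apply is_series_Reals. apply is_series_Reals in H1.
  eapply is_series_ext; eauto.
Qed.

Lemma ex_series_infinite a : ex_series a -> infinite_sum a (Series a).
Proof. intro. apply is_series_Reals. now apply Series_correct. Qed.

Lemma infinite_sum_scal a l c : infinite_sum a l -> infinite_sum (fun n => c * a n) (c * l).
Proof.
  intro H. apply is_series_Reals in H. apply is_series_Reals.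
  apply (is_series_scal c) in H. exact H.
Qed.

Lemma infinite_sum_plus a b la lb : infinite_sum a la -> infinite_sum b lb ->
  infinite_sum (fun n => a n + b n) (la + lb).
Proof.
  intros H1 H2. apply is_series_Reals in H1. apply is_series_Reals in H2. apply is_series_Reals.
  exact (is_series_plus _ _ _ _ H1 H2).
Qed.

Lemma infinite_sum_minus a b la lb : infinite_sum a la -> infinite_sum b lb ->
  infinite_sum (fun n => a n - b n) (la - lb).
Proof.
  intros H1 H2. apply (infinite_sum_scal _ _ (-1)) in H2.
  eapply infinite_sum_ext. 2: { replace (la - lb) with (la + -1 * lb) by ring. apply infinite_sum_plus; eauto. }
  intro; simpl; ring.
Qed.

Lemma PSeries_inf a x : CV_radius a = p_infty -> infinite_sum (fun l => a l * x ^ l) (PSeries a x).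
Proof.
  intro H. apply ex_series_infinite. pose proof (CV_radius_inside a x (inside_inf _ _ H)) as H1.
  eapply ex_series_ext. 2: exact H1. intro n. simpl. rewrite pow_n_pow. unfold scal; simpl; unfold mult; simpl. ring.
Qed.

Lemma rsum_ext f g n : (forall i, (i < n)%nat -> f i = g i) -> rsum f n = rsum g n.
Proof. induction n; intro H; simpl; auto. rewrite IHn; [|intros; apply H; lia]. rewrite H; auto. Qed.

Lemma rsum_split f a b : rsum f (a + b) = rsum f a + rsum (fun i => f (a + i)%nat) b.
Proof. induction b; simpl. rewrite Nat.add_0_r; ring. rewrite Nat.add_succ_r. simpl. rewrite IHb. ring. Qed.

Lemma rsum_rev f n : rsum f n = rsum (fun i => f (n - 1 - i)%nat) n.
Proof.
  induction n. reflexivity.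
  change (rsum f n + f n = rsum (fun i => f (S n - 1 - i)%nat) (1 + n)).
  rewrite rsum_split. rewrite IHn.
  assert (E1 : rsum (fun i : nat => f (S n - 1 - i)%nat) 1 = f n).
  { simpl. replace (n - 0 - 0)%nat with n by lia. ring. }
  rewrite E1, Rplus_comm. f_equal. apply rsum_ext. intros. f_equal. lia.
Qed.

Lemma rsum_scal c f n : rsum (fun i => c * f i) n = c * rsum f n.
Proof. induction n; simpl. ring. rewrite IHn; ring. Qed.

Section Alg.
Variable k : nat.
Hypothesis Hk : (1 <= k)%nat.

Definition Xs (w : R) := Series (fun l => phi k l * harmonic l * w ^ l).
Definition Zs (w : R) := Series (fun l => phi k l * harmonic (k + l) * w ^ l).

Lemma Xs_ex w : ex_series (fun l => phi k l * harmonic l * w ^ l).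
Proof.
  apply ex_series_Rabs. apply (@ex_series_le R_AbsRing R_CompleteNormedModule _ (fun n => Rabs (chi k n * w ^ n))).
  2: apply chi_abs; auto.
  intro l. unfold norm; simpl. unfold abs; simpl. rewrite Rabs_Rabsolu. unfold chi.
  rewrite !Rabs_mult. pose proof (harmonic_ge0 l). pose proof (harmonic_ge0 (k+l)).
  rewrite (Rabs_right (harmonic l)) by lra. rewrite (Rabs_right (_ + _)) by lra.
  pose proof (Rabs_pos (phi k l)). pose proof (Rabs_pos (w ^ l)).
  apply Rmult_le_compat_r; auto. apply Rmult_le_compat_l; lra.
Qed.

Lemma Zs_ex w : ex_series (fun l => phi k l * harmonic (k + l) * w ^ l).
Proof.
  apply ex_series_Rabs. apply (@ex_series_le R_AbsRing R_CompleteNormedModule _ (fun n => Rabs (chi k n * w ^ n))).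
  2: apply chi_abs; auto.
  intro l. unfold norm; simpl. unfold abs; simpl. rewrite Rabs_Rabsolu. unfold chi.
  rewrite !Rabs_mult. pose proof (harmonic_ge0 l). pose proof (harmonic_ge0 (k+l)).
  rewrite (Rabs_right (harmonic (k + l))) by lra. rewrite (Rabs_right (_ + _)) by lra.
  pose proof (Rabs_pos (phi k l)). pose proof (Rabs_pos (w ^ l)).
  apply Rmult_le_compat_r; auto. apply Rmult_le_compat_l; lra.
Qed.

Lemma Chi_XZ w : PSeries (chi k) w = Xs w + Zs w.
Proof.
  unfold PSeries, Xs, Zs. rewrite <- Series_plus by (apply Xs_ex || apply Zs_ex).
  apply Series_ext. intro; unfold chi; ring.
Qed.

Lemma pow_split (s : R) l : s ^ (k + 2 * l) = s ^ k * (s ^ 2) ^ l.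
Proof. rewrite pow_add, pow_mult. reflexivity. Qed.

Lemma besselJ_eq z : besselJ k z = (z / 2) ^ k * PSeries (phi k) ((z / 2) ^ 2).
Proof.
  unfold besselJ. apply series_sum_eq.
  eapply infinite_sum_ext. 2: apply infinite_sum_scal, PSeries_inf, phi_CV.
  intro l. cbv beta. rewrite pow_split. unfold phi. field.
  split; apply not_0_INR, fact_neq_0.
Qed.

Lemma Ysum_eq z : series_sum (fun l => (-1) ^ l * (z / 2) ^ (k + 2 * l)
                       * (digamma (INR l + 1) + digamma (INR (k + l) + 1))
                       / (INR (fact l) * INR (fact (k + l))))
   = (z / 2) ^ k * (PSeries (chi k) ((z/2)^2) - 2 * euler_gamma * PSeries (phi k) ((z / 2) ^ 2)).
Proof.
  apply series_sum_eq. rewrite Chi_XZ.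
  eapply infinite_sum_ext.
  2: { apply infinite_sum_scal. apply infinite_sum_minus.
       apply infinite_sum_plus; apply ex_series_infinite; [apply Xs_ex|apply Zs_ex].
       apply infinite_sum_scal, PSeries_inf, phi_CV. }
  intro l. cbv beta. rewrite pow_split, !digamma_nat. unfold phi. field.
  split; apply not_0_INR, fact_neq_0.
Qed.

Lemma Psum_eq z : series_sum (fun l => (-1) ^ l * (z / 2) ^ (k + 2 * l)
                 * (digamma (INR (k + l) + 1) - digamma (INR l + 1))
                 / (INR (fact l) * INR (fact (k + l))))
   = (z / 2) ^ k * (Zs ((z/2)^2) - Xs ((z/2)^2)).
Proof.
  apply series_sum_eq.
  eapply infinite_sum_ext.
  2: { apply infinite_sum_scal. apply infinite_sum_minus; apply ex_series_infinite; [apply Zs_ex|apply Xs_ex]. }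
  intro l. cbv beta. rewrite pow_split, !digamma_nat. unfold phi. field.
  split; apply not_0_INR, fact_neq_0.
Qed.

Lemma Qsum_eq z : Q_fun k z = (z / 2) ^ k * Zs ((z/2)^2).
Proof.
  unfold Q_fun. apply series_sum_eq.
  eapply infinite_sum_ext.
  2: { apply infinite_sum_scal. apply ex_series_infinite; apply Zs_ex. }
  intro l. cbv beta. rewrite pow_split, !digamma_nat. unfold phi. field.
  split; apply not_0_INR, fact_neq_0.
Qed.

Definition fcoef (r : nat) : R := INR (fact (k - r - 1)) / INR (fact r).
Definition Fterm (z : R) (r : nat) : R := fcoef r * (z / 2) ^ (2 * r) / (z / 2) ^ k.

Lemma besselY_eq z : besselY k z =
  - (/ PI) * rsum (Fterm z) k + (2 / PI) * ln (z / 2) * ((z / 2) ^ k * PSeries (phi k) ((z / 2) ^ 2))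
  - (/ PI) * ((z / 2) ^ k * (PSeries (chi k) ((z/2)^2) - 2 * euler_gamma * PSeries (phi k) ((z / 2) ^ 2))).
Proof.
  unfold besselY. rewrite besselJ_eq, Ysum_eq. reflexivity.
Qed.

End Alg.

Lemma telescope_ex (b : nat -> R) : is_lim_seq b 0 -> ex_series (fun m => b m - b (S m)).
Proof.
  intro H. exists (b 0%nat - 0).
  cut (is_lim_seq (sum_n (fun m => b m - b (S m))) (b 0%nat - 0)). { intro H1; exact H1. }
  apply (is_lim_seq_ext (fun N => b 0%nat - b (S N))).
  - intro N. rewrite sum_n_rsum. induction N. simpl. ring.
    change (rsum (fun m => b m - b (S m)) (S (S N))) with (rsum (fun m => b m - b (S m)) (S N) + (b (S N) - b (S (S N)))).
    rewrite <- IHN. ring.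
  - apply (is_lim_seq_minus' _ _ (b 0%nat) 0). apply is_lim_seq_const.
    apply (is_lim_seq_incr_1 b 0). exact H.
Qed.

Lemma ex_series_cmp (a b : nat -> R) : (forall n, Rabs (a n) <= b n) -> ex_series b -> ex_series a.
Proof.
  intros H Hb. apply ex_series_Rabs. apply (@ex_series_le R_AbsRing R_CompleteNormedModule _ b); auto.
  intro n. unfold norm; simpl; unfold abs; simpl. rewrite Rabs_Rabsolu. auto.
Qed.

Lemma inv_le_div a b c : 0 < a -> 0 < b -> b <= c * a -> / a <= c / b.
Proof.
  intros Ha Hb H. apply (Rmult_le_reg_r (a * b)). nra.
  replace (/ a * (a * b)) with b by (field; lra).
  replace (c / b * (a * b)) with (c * a) by (field; lra). auto.
Qed.

Lemma ex_series_inv_sq : ex_series (fun m => / (INR (S m)) ^ 2).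
Proof.
  apply (ex_series_cmp _ (fun m => 2 * (/ INR (S m) - / INR (S (S m))))).
  - intro m. rewrite Rabs_right.
    2: { apply Rle_ge. apply Rlt_le, Rinv_0_lt_compat, pow_lt, lt_0_INR; lia. }
    rewrite !S_INR. pose proof (pos_INR m).
    replace (2 * (/ (INR m + 1) - / (INR m + 1 + 1))) with (2 / ((INR m + 1) * (INR m + 1 + 1))) by (field; lra).
    apply inv_le_div. apply pow_lt; lra. nra. nra.
  - apply (ex_series_scal_l 2 (fun m => / INR (S m) - / INR (S (S m)))).
    apply (telescope_ex (fun m => / INR (S m))). apply lim_inv_S.
Qed.

Lemma term_identity n z : (1 <= n)%nat -> 0 < z ->
  2 * (euler_gamma + ln (z / 2)) * besselJ (2 * n) z + P_fun (2 * n) z - 2 * Q_fun (2 * n) z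
  = PI * besselY (2 * n) z + rsum (Fterm (2 * n) z) n.
Proof.
  intros hn hz. assert (Hk : (1 <= 2 * n)%nat) by lia.
  rewrite (besselY_eq (2 * n) Hk), (besselJ_eq (2 * n)), (Qsum_eq (2 * n) Hk).
  unfold P_fun. rewrite (Psum_eq (2 * n) Hk). rewrite (Chi_XZ (2 * n) Hk).
  assert (E1 : ((2 * n + 1) / 2 = n)%nat).
  { rewrite Nat.add_comm. apply (Nat.add_b2n_double_div2 true). }
  unfold rsum_range. rewrite E1. replace (S (2 * n - 1) - n)%nat with n by lia.
  replace (rsum (Fterm (2 * n) z) (2 * n)) with (rsum (Fterm (2 * n) z) (n + n)) by (f_equal; lia).
  rewrite rsum_split.
  change (rsum (fun i : nat => INR (fact (2 * n - (n + i) - 1)) / INR (fact (n + i)) *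
      (z / 2) ^ (2 * (n + i)) / (z / 2) ^ (2 * n)) n)
    with (rsum (fun i => Fterm (2 * n) z (n + i)) n).
  pose proof PI_RGT_0. field. lra.
Qed.

Definition Fl (n m : nat) : R := rsum (Fterm (2 * n) (4 * PI * INR (S m))) n.

Lemma Fl_eq n m : (1 <= n)%nat -> Fl n m =
  rsum (fun r => INR (fact (n + r)) / INR (fact (n - r - 1)) / (2 * PI * INR (S m)) ^ (2 * r + 2)) n.
Proof.
  intro hn. unfold Fl. rewrite rsum_rev. apply rsum_ext. intros i Hi.
  unfold Fterm, fcoef.
  replace (4 * PI * INR (S m) / 2) with (2 * PI * INR (S m)) by field.
  replace (2 * n - (n - 1 - i) - 1)%nat with (n + i)%nat by lia.
  replace (n - 1 - i)%nat with (n - i - 1)%nat by lia.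
  assert (E : (2 * PI * INR (S m)) ^ (2 * n) = (2 * PI * INR (S m)) ^ (2 * (n - i - 1)) * (2 * PI * INR (S m)) ^ (2 * i + 2)).
  { rewrite <- pow_add. f_equal. lia. }
  rewrite E.
  assert (0 < 2 * PI * INR (S m)). { pose proof PI_RGT_0. pose proof (lt_0_INR (S m) ltac:(lia)). nra. }
  assert (0 < (2 * PI * INR (S m)) ^ (2 * (n - i - 1))) by (apply pow_lt; lra).
  assert (0 < (2 * PI * INR (S m)) ^ (2 * i + 2)) by (apply pow_lt; lra).
  field. repeat split; try lra; apply not_0_INR, fact_neq_0.
Qed.

Lemma A_term_eq n x m : (1 <= n)%nat ->
  A_term n x (S m) = (-1) ^ (n + 1) * cos (2 * PI * INR (S m) * x) * Fl n m.
Proof. intro hn. unfold A_term. rewrite Fl_eq; auto. Qed.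

Lemma rsum_abs_le f g N : (forall i, (i < N)%nat -> Rabs (f i) <= g i) -> Rabs (rsum f N) <= rsum g N.
Proof.
  induction N; intro H. simpl. rewrite Rabs_R0. lra.
  simpl. eapply Rle_trans. apply Rabs_triang. apply Rplus_le_compat. apply IHN; intros; apply H; lia. apply H; lia.
Qed.

Lemma Fl_bound n : (1 <= n)%nat -> exists K, forall m, Rabs (Fl n m) <= K * / (INR (S m)) ^ 2.
Proof.
  intro hn. exists (rsum (fun r => INR (fact (n + r)) / INR (fact (n - r - 1))) n).
  intro m. rewrite Fl_eq; auto.
  assert (Hs : INR (S m) <= 2 * PI * INR (S m)).
  { pose proof PI2_1. pose proof (lt_0_INR (S m) ltac:(lia)). nra. }
  assert (H1 : 1 <= INR (S m)) by (apply (le_INR 1); lia).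
  rewrite <- (Rmult_comm (/ _)), <- rsum_scal.
  apply rsum_abs_le. intros N HN.
  pose proof (INR_fact_pos (n + N)). pose proof (INR_fact_pos (n - N - 1)).
  rewrite Rabs_right.
  2: { apply Rle_ge. unfold Rdiv. repeat apply Rmult_le_pos; try lra; apply Rlt_le, Rinv_0_lt_compat; try lra.
       apply pow_lt; lra. }
  unfold Rdiv. rewrite (Rmult_comm (/ INR (S m) ^ 2)). apply Rmult_le_compat_l.
  apply Rmult_le_pos; try lra. apply Rlt_le, Rinv_0_lt_compat; lra.
  apply Rinv_le_contravar. apply pow_lt; lra.
  replace (2 * N + 2)%nat with (2 + 2 * N)%nat by lia. rewrite pow_add.
  rewrite <- (Rmult_1_r (INR (S m) ^ 2)). apply Rmult_le_compat.
  apply pow_le; lra. lra. apply pow_incr; lra. apply pow_R1_Rle. lra.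
Qed.

Lemma main_from_Y n x : (1 <= n)%nat ->
  (exists S1, infinite_sum (fun m => besselY (2 * n) (4 * PI * INR (S m))
                           * cos (2 * PI * INR (S m) * x)) S1) ->
  exists S1 S2 : R,
    infinite_sum (fun m => besselY (2 * n) (4 * PI * INR (S m))
                           * cos (2 * PI * INR (S m) * x)) S1 /\
    infinite_sum (fun m =>
        (2 * (euler_gamma + ln (2 * PI * INR (S m))) * besselJ (2 * n) (4 * PI * INR (S m))
         + P_fun (2 * n) (4 * PI * INR (S m))
         - 2 * Q_fun (2 * n) (4 * PI * INR (S m)))
        * cos (2 * PI * INR (S m) * x)) S2 /\
    infinite_sum (fun m => A_term n x (S m))
      ((-1) ^ n * PI * S1 + (-1) ^ (n + 1) * S2).
Proof.
  intros hn [S1 HS1].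
  assert (HB : ex_series (fun m => Fl n m * cos (2 * PI * INR (S m) * x))).
  { destruct (Fl_bound n hn) as [K HK].
    apply (ex_series_cmp _ (fun m => K * / INR (S m) ^ 2)).
    - intro m. rewrite Rabs_mult. pose proof (COS_bound (2 * PI * INR (S m) * x)).
      assert (Rabs (cos (2 * PI * INR (S m) * x)) <= 1) by (apply Rabs_le; lra).
      pose proof (HK m). pose proof (Rabs_pos (Fl n m)). pose proof (Rabs_pos (cos (2 * PI * INR (S m) * x))). nra.
    - apply (ex_series_scal_l K (fun m => / INR (S m) ^ 2)). apply ex_series_inv_sq. }
  set (B := Series (fun m => Fl n m * cos (2 * PI * INR (S m) * x))).
  exists S1, (PI * S1 + B). split; auto. split.
  - eapply infinite_sum_ext.
    2: { apply infinite_sum_plus. apply (infinite_sum_scal _ S1 PI HS1). apply ex_series_infinite, HB. }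
    intro m. cbv beta.
    assert (0 < 4 * PI * INR (S m)). { pose proof PI_RGT_0. pose proof (lt_0_INR (S m) ltac:(lia)). nra. }
    replace (ln (2 * PI * INR (S m))) with (ln (4 * PI * INR (S m) / 2)) by (f_equal; field).
    rewrite term_identity; auto. unfold Fl. ring.
  - replace ((-1) ^ n * PI * S1 + (-1) ^ (n + 1) * (PI * S1 + B)) with ((-1) ^ (n + 1) * B)
      by (rewrite pow_add; ring).
    eapply infinite_sum_ext.
    2: { apply (infinite_sum_scal _ _ ((-1) ^ (n + 1)) (ex_series_infinite _ HB)). }
    intro m. cbv beta. rewrite A_term_eq; auto. ring.
Qed.

Definition ee (p s : R) : R := exp (p * ln s).

Definition ODE2 (f f1 f2 : R -> R) :=
  forall s, 0 < s -> is_derive f s (f1 s) /\ is_derive f1 s (f2 s).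

Definition Entire2 (g g1 g2 : R -> R) :=
  forall w, is_derive g w (g1 w) /\ is_derive g1 w (g2 w).

Lemma Entire2_ex g g1 g2 : Entire2 g g1 g2 -> (forall w, ex_derive g w) /\ (forall w, ex_derive g1 w).
Proof. intro H. split; intro w; eexists; apply H. Qed.

Lemma ODE2_eg p g g1 g2 : Entire2 g g1 g2 ->
  ODE2 (fun s => ee p s * g (s ^ 2))
       (fun s => ee p s * (p / s * g (s ^ 2) + 2 * s * g1 (s ^ 2)))
       (fun s => ee p s * ((p * p - p) / s ^ 2 * g (s ^ 2) + (4 * p + 2) * g1 (s ^ 2) + 4 * s ^ 2 * g2 (s ^ 2))).
Proof.
  intros Hg s hs. destruct (Entire2_ex _ _ _ Hg) as [D1 D2]. unfold ee. split.
  - auto_derive.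
    + repeat split; auto; lra.
    + try rewrite (is_derive_unique g _ (g1 (s * (s * 1)))) by apply Hg.
      try rewrite (is_derive_unique (fun x => g x) _ (g1 (s * (s * 1)))) by apply Hg.
      replace (s * (s * 1)) with (s ^ 2) by ring. field. lra.
  - auto_derive.
    + repeat split; auto; lra.
    + try rewrite (is_derive_unique g _ (g1 (s * (s * 1)))) by apply Hg.
      try rewrite (is_derive_unique (fun x => g x) _ (g1 (s * (s * 1)))) by apply Hg.
      try rewrite (is_derive_unique g1 _ (g2 (s * (s * 1)))) by apply Hg.
      try rewrite (is_derive_unique (fun x => g1 x) _ (g2 (s * (s * 1)))) by apply Hg.
      replace (s * (s * 1)) with (s ^ 2) by ring. field. lra.
Qed.

Lemma ODE2_ln f f1 f2 : ODE2 f f1 f2 ->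
  ODE2 (fun s => ln s * f s) (fun s => f s / s + ln s * f1 s)
       (fun s => - f s / s ^ 2 + 2 * f1 s / s + ln s * f2 s).
Proof.
  intros Hf s hs. destruct (Hf s hs) as [H1 H2]. split.
  - pose proof (is_derive_mult ln f s _ _ (is_derive_ln s hs) H1 (fun a b => Rmult_comm a b)) as H.
    replace (f s / s + ln s * f1 s) with (plus (mult (/ s) (f s)) (mult (ln s) (f1 s)))
      by (unfold plus, mult; simpl; field; lra). exact H.
  - assert (E1 : ex_derive f s) by (eexists; eauto).
    assert (E2 : ex_derive f1 s) by (eexists; eauto).
    auto_derive.
    + repeat split; auto; lra.
    + replace (Derive (fun x => f x) s) with (f1 s) by (symmetry; apply is_derive_unique; exact H1).
      replace (Derive (fun x => f1 x) s) with (f2 s) by (symmetry; apply is_derive_unique; exact H2).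
      field. lra.
Qed.

Lemma ODE2_lin a b f f1 f2 g g1 g2 : ODE2 f f1 f2 -> ODE2 g g1 g2 ->
  ODE2 (fun s => a * f s + b * g s) (fun s => a * f1 s + b * g1 s) (fun s => a * f2 s + b * g2 s).
Proof.
  intros Hf Hg s hs. destruct (Hf s hs), (Hg s hs). split.
  - apply (is_derive_plus (fun s => a * f s) (fun s => b * g s)); apply is_derive_scal; auto.
  - apply (is_derive_plus (fun s => a * f1 s) (fun s => b * g1 s)); apply is_derive_scal; auto.
Qed.

Lemma ODE2_rsum (F F1 F2 : nat -> R -> R) N : (forall r, ODE2 (F r) (F1 r) (F2 r)) ->
  ODE2 (fun s => rsum (fun r => F r s) N) (fun s => rsum (fun r => F1 r s) N) (fun s => rsum (fun r => F2 r s) N).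
Proof.
  intro H. induction N.
  - intros s hs. simpl. split; apply (is_derive_const 0).
  - intros s hs. destruct (IHN s hs). destruct (H N s hs). simpl. split.
    + apply (is_derive_plus (fun s => rsum (fun r => F r s) N) (F N)); auto.
    + apply (is_derive_plus (fun s => rsum (fun r => F1 r s) N) (F1 N)); auto.
Qed.

Lemma Entire2_PS a : CV_radius a = p_infty ->
  Entire2 (PSeries a) (PSeries (PS_derive a)) (PSeries (PS_derive (PS_derive a))).
Proof.
  intros H w. split; apply is_derive_PSeries.
  - rewrite H; simpl; auto.
  - rewrite CV_radius_derive, H; simpl; auto.
Qed.

Lemma Entire2_1 : Entire2 (fun _ => 1) (fun _ => 0) (fun _ => 0).
Proof. intro w. split; auto_derive; auto; ring. Qed.

Lemma ex_PS a w : CV_radius a = p_infty -> ex_series (fun n => a n * w ^ n).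
Proof. intro H. eexists. apply is_series_Reals. apply PSeries_inf. auto. Qed.

Lemma PSeries_lin3 a b c al be ga w :
  CV_radius a = p_infty -> CV_radius b = p_infty -> CV_radius c = p_infty ->
  al * PSeries a w + be * PSeries b w + ga * PSeries c w
  = PSeries (fun n => al * a n + be * b n + ga * c n) w.
Proof.
  intros Ha Hb Hc. unfold PSeries.
  rewrite <- !Series_scal_l.
  rewrite <- Series_plus.
  2: apply (ex_series_scal_l al (fun n => a n * w ^ n)), ex_PS; auto.
  2: apply (ex_series_scal_l be (fun n => b n * w ^ n)), ex_PS; auto.
  rewrite <- Series_plus.
  3: apply (ex_series_scal_l ga (fun n => c n * w ^ n)), ex_PS; auto.
  2: { apply (ex_series_plus (fun n => al * (a n * w ^ n)) (fun n => be * (b n * w ^ n)));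
       [apply (ex_series_scal_l al (fun n => a n * w ^ n)) | apply (ex_series_scal_l be (fun n => b n * w ^ n))]; apply ex_PS; auto. }
  apply Series_ext. intro n. ring.
Qed.

Lemma PSeries_single d w : (forall n, d (S n) = 0) -> PSeries d w = d 0%nat.
Proof.
  intro H. unfold PSeries. apply is_series_unique.
  cut (is_lim_seq (sum_n (fun n => d n * w ^ n)) (d 0%nat)). { intro H1; exact H1. }
  apply (is_lim_seq_ext (fun _ => d 0%nat)). 2: apply is_lim_seq_const.
  intro N. induction N. rewrite sum_O. simpl. ring.
  rewrite sum_Sn, <- IHN, H. unfold plus; simpl. ring.
Qed.

Section Ser.
Variable k : nat.
Hypothesis Hk : (1 <= k)%nat.

Definition Phi := PSeries (phi k).
Definition Phi1 := PSeries (PS_derive (phi k)).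
Definition Phi2 := PSeries (PS_derive (PS_derive (phi k))).
Definition Chi := PSeries (chi k).
Definition Chi1 := PSeries (PS_derive (chi k)).
Definition Chi2 := PSeries (PS_derive (PS_derive (chi k))).

Lemma CV_d a : CV_radius a = p_infty -> CV_radius (PS_derive a) = p_infty.
Proof. intro; rewrite CV_radius_derive; auto. Qed.

Lemma CV_i a : CV_radius a = p_infty -> CV_radius (PS_incr_1 a) = p_infty.
Proof. intro; rewrite CV_radius_incr_1; auto. Qed.

Lemma phi_rel l : INR (S l) * INR (S (k + l)) * phi k (S l) = - phi k l.
Proof. rewrite phi_S. field. split; apply not_0_INR; lia. Qed.

Lemma ser_S1 w : w * Phi2 w + (INR k + 1) * Phi1 w + Phi w = 0.
Proof.
  unfold Phi2, Phi1, Phi. rewrite <- PSeries_incr_1.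
  rewrite <- (Rmult_1_l (PSeries (PS_incr_1 _) w)), <- (Rmult_1_l (PSeries (phi k) w)).
  rewrite PSeries_lin3; try apply CV_i; try apply CV_d; try apply CV_d; try apply phi_CV.
  rewrite <- (PSeries_const_0 w). apply PSeries_ext. intro n.
  destruct n.
  - simpl PS_incr_1. unfold PS_derive. pose proof (phi_rel 0). rewrite Nat.add_0_r in H.
    assert (E : phi k 0 = - (INR 1 * INR (S k) * phi k 1)) by lra. rewrite E.
    rewrite (S_INR k). unfold zero; simpl. ring.
  - simpl PS_incr_1. unfold PS_derive. pose proof (phi_rel (S n)).
    replace (S (k + S n)) with (S (S (k + n))) in H by lia.
    assert (E : phi k (S n) = - (INR (S (S n)) * INR (S (S (k + n))) * phi k (S (S n)))) by lra.
    rewrite E. rewrite !S_INR, plus_INR. ring.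
Qed.

Lemma CV_lin3 a b c al be ga : al <> 0 -> be <> 0 -> ga <> 0 ->
  CV_radius a = p_infty -> CV_radius b = p_infty -> CV_radius c = p_infty ->
  CV_radius (fun n => al * a n + be * b n + ga * c n) = p_infty.
Proof.
  intros H1 H2 H3 Ha Hb Hc.
  assert (Ea : CV_radius (PS_scal al a) = p_infty) by (rewrite CV_radius_scal; auto).
  assert (Eb : CV_radius (PS_scal be b) = p_infty) by (rewrite CV_radius_scal; auto).
  assert (Ec : CV_radius (PS_scal ga c) = p_infty) by (rewrite CV_radius_scal; auto).
  pose proof (CV_radius_plus (PS_scal al a) (PS_scal be b)) as P1.
  rewrite Ea, Eb in P1. simpl in P1.
  assert (E1 : CV_radius (PS_plus (PS_scal al a) (PS_scal be b)) = p_infty).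
  { destruct (CV_radius (PS_plus (PS_scal al a) (PS_scal be b))); simpl in P1; try tauto; auto. }
  pose proof (CV_radius_plus (PS_plus (PS_scal al a) (PS_scal be b)) (PS_scal ga c)) as P2.
  rewrite E1, Ec in P2. simpl in P2.
  rewrite <- (CV_radius_ext (PS_plus (PS_plus (PS_scal al a) (PS_scal be b)) (PS_scal ga c))).
  { destruct (CV_radius (PS_plus (PS_plus (PS_scal al a) (PS_scal be b)) (PS_scal ga c))); simpl in P2; try tauto; auto. }
  intro n. reflexivity.
Qed.

Definition cT (n : nat) : R := 1 * PS_incr_1 (PS_derive (PS_derive (chi k))) n
   + (INR k + 1) * PS_derive (chi k) n + 1 * chi k n.

Lemma cT_eq m : cT m = INR (S m) * INR (S (k + m)) * chi k (S m) + chi k m.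
Proof.
  unfold cT. destruct m.
  - unfold PS_derive. rewrite Nat.add_0_r, (S_INR k). unfold PS_incr_1, zero; simpl. ring.
  - unfold PS_incr_1, PS_derive. replace (k + S m)%nat with (S (k + m)) by lia.
    rewrite !S_INR, plus_INR. ring.
Qed.

Lemma ser_S2 w : w * (w * Chi2 w + (INR k + 1) * Chi1 w + Chi w)
   = INR k * Phi w + 2 * w * Phi1 w - / INR (fact (k - 1)).
Proof.
  unfold Chi2, Chi1, Chi, Phi, Phi1. rewrite <- PSeries_incr_1.
  rewrite <- (Rmult_1_l (PSeries (PS_incr_1 (PS_derive (PS_derive (chi k)))) w)),
    <- (Rmult_1_l (PSeries (chi k) w)).
  assert (Cc := chi_CV k Hk).
  rewrite PSeries_lin3; try apply CV_i; try apply CV_d; try apply CV_d; auto.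
  fold cT.
  rewrite <- PSeries_incr_1.
  rewrite Rmult_assoc, <- PSeries_incr_1.
  apply (Rplus_eq_reg_r (- (INR k * PSeries (phi k) w) - 2 * PSeries (PS_incr_1 (PS_derive (phi k))) w)).
  replace (INR k * PSeries (phi k) w + 2 * PSeries (PS_incr_1 (PS_derive (phi k))) w -
   / INR (fact (k - 1)) + (- (INR k * PSeries (phi k) w) - 2 * PSeries (PS_incr_1 (PS_derive (phi k))) w))
   with (- / INR (fact (k - 1))) by ring.
  replace (PSeries (PS_incr_1 cT) w + (- (INR k * PSeries (phi k) w) - 2 * PSeries (PS_incr_1 (PS_derive (phi k))) w))
    with (1 * PSeries (PS_incr_1 cT) w + (- INR k) * PSeries (phi k) w + (-2) * PSeries (PS_incr_1 (PS_derive (phi k))) w) by ring.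
  assert (HcT : CV_radius cT = p_infty).
  { unfold cT. apply CV_lin3; try apply CV_i; try apply CV_d; try apply CV_d; auto; try lra.
    pose proof (pos_INR k); lra. }
  assert (Hkpos : 0 < INR k) by (apply lt_0_INR; lia).
  rewrite PSeries_lin3; try apply CV_i; try apply CV_d; auto; try apply phi_CV.
  rewrite PSeries_single.
  - unfold PS_incr_1, zero; simpl. unfold phi. simpl. rewrite Nat.add_0_r.
    replace (fact k) with (fact (S (k - 1))) by (f_equal; lia). rewrite fact_simpl, mult_INR.
    replace (S (k - 1)) with k by lia.
    pose proof (INR_fact_pos (k - 1)). field. lra.
  - intro m. unfold PS_incr_1. rewrite cT_eq. unfold PS_derive, chi.
    pose proof (phi_rel m) as E. 
    assert (E2 : phi k m = - (INR (S m) * INR (S (k + m)) * phi k (S m))) by lra.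
    rewrite E2. replace (k + S m)%nat with (S (k + m)) by lia. rewrite !harmonic_S.
    rewrite !S_INR, plus_INR. field. split; pose proof (pos_INR m); pose proof (pos_INR k); lra.
Qed.
End Ser.

Lemma ee_pow n s : 0 < s -> ee (INR n) s = s ^ n.
Proof. intro. unfold ee. apply (Rpower_pow n s H). Qed.

Lemma ee_plus a b s : ee (a + b) s = ee a s * ee b s.
Proof. unfold ee. rewrite Rmult_plus_distr_r. apply exp_plus. Qed.

Lemma ee_minus a b s : ee (a - b) s = ee a s / ee b s.
Proof. unfold ee. unfold Rminus. rewrite Rmult_plus_distr_r, exp_plus.
  replace (- b * ln s) with (- (b * ln s)) by ring. rewrite exp_Ropp. reflexivity. Qed.

Lemma ee_pos p s : 0 < ee p s.
Proof. apply exp_pos. Qed.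

Lemma ee_2 p s : 0 < s -> ee p s * s ^ 2 = ee (p + 2) s.
Proof. intro. rewrite ee_plus. f_equal. replace 2 with (INR 2) by (simpl; ring). rewrite ee_pow; auto. Qed.

Lemma ODE2_scal c f f1 f2 : ODE2 f f1 f2 -> ODE2 (fun s => c * f s) (fun s => c * f1 s) (fun s => c * f2 s).
Proof. intros H s hs. destruct (H s hs). split; apply is_derive_scal; auto. Qed.

Lemma isd_lin4 a b c d f g h i s df dg dh di :
  is_derive f s df -> is_derive g s dg -> is_derive h s dh -> is_derive i s di ->
  is_derive (fun s => a * f s + b * g s + c * h s + d * i s) s (a * df + b * dg + c * dh + d * di).
Proof.
  intros. apply (is_derive_plus (fun s => a * f s + b * g s + c * h s) (fun s => d * i s) s (a * df + b * dg + c * dh) (d * di)).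
  apply (is_derive_plus (fun s => a * f s + b * g s) (fun s => c * h s) s (a * df + b * dg) (c * dh)).
  apply (is_derive_plus (fun s => a * f s) (fun s => b * g s) s (a * df) (b * dg)).
  all: apply is_derive_scal; auto.
Qed.

Lemma ODE2_lin4 a b c d f f1 f2 g g1 g2 h h1 h2 i i1 i2 :
  ODE2 f f1 f2 -> ODE2 g g1 g2 -> ODE2 h h1 h2 -> ODE2 i i1 i2 ->
  ODE2 (fun s => a * f s + b * g s + c * h s + d * i s)
       (fun s => a * f1 s + b * g1 s + c * h1 s + d * i1 s)
       (fun s => a * f2 s + b * g2 s + c * h2 s + d * i2 s).
Proof.
  intros Hf Hg Hh Hi s hs. destruct (Hf s hs), (Hg s hs), (Hh s hs), (Hi s hs).
  split; apply isd_lin4; auto.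
Qed.

Section Ode.
Variable k : nat.
Hypothesis Hk : (1 <= k)%nat.

Definition Lv (f f1 f2 : R -> R) (s : R) := s ^ 2 * f2 s + s * f1 s + (4 * s ^ 2 - INR k ^ 2) * f s.

Definition pr (r : nat) : R := INR (2 * r) - INR k.

Definition FS (s : R) := rsum (fun r => fcoef k r * (ee (pr r) s * 1)) k.
Definition FS1 (s : R) := rsum (fun r => fcoef k r * (ee (pr r) s * (pr r / s * 1 + 2 * s * 0))) k.
Definition FS2 (s : R) := rsum (fun r => fcoef k r * (ee (pr r) s * ((pr r * pr r - pr r) / s ^ 2 * 1 + (4 * pr r + 2) * 0 + 4 * s ^ 2 * 0))) k.

Lemma FS_ODE : ODE2 FS FS1 FS2.
Proof.
  apply (ODE2_rsum (fun r s => fcoef k r * (ee (pr r) s * 1))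
     (fun r s => fcoef k r * (ee (pr r) s * (pr r / s * 1 + 2 * s * 0)))
     (fun r s => fcoef k r * (ee (pr r) s * ((pr r * pr r - pr r) / s ^ 2 * 1 + (4 * pr r + 2) * 0 + 4 * s ^ 2 * 0)))).
  intro r. apply ODE2_scal. apply (ODE2_eg (pr r) (fun _ => 1) (fun _ => 0) (fun _ => 0)). apply Entire2_1.
Qed.

Lemma fcoef_rel r : (1 <= r)%nat -> (r < k)%nat -> fcoef k r * (INR r * INR (k - r)) = fcoef k (r - 1).
Proof.
  intros H1 H2. unfold fcoef.
  replace (k - (r - 1) - 1)%nat with (S (k - r - 1)) by lia.
  replace (fact r) with (fact (S (r - 1))) by (f_equal; lia).
  rewrite !fact_simpl, !mult_INR.
  replace (S (r - 1)) with r by lia. replace (S (k - r - 1)) with (k - r)%nat by lia.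
  pose proof (INR_fact_pos (r - 1)). pose proof (INR_fact_pos (k - r - 1)).
  field. split; try lra. apply not_0_INR; lia.
Qed.

Lemma FS_tele N s : 0 < s -> (1 <= N)%nat -> (N <= k)%nat ->
  rsum (fun r => fcoef k r * (ee (pr r) s * ((pr r * pr r - INR k ^ 2) + 4 * s ^ 2))) N
  = 4 * fcoef k (N - 1) * ee (pr N) s.
Proof.
  intros hs H1 H2. induction H1.
  - cbn [rsum]. replace (pr 1) with (pr 0 + 2) by (unfold pr; simpl; ring).
    rewrite <- ee_2 by auto.
    replace (pr 0 * pr 0 - INR k ^ 2) with 0 by (unfold pr; simpl; ring).
    simpl (1 - 1)%nat. ring.
  - cbn [rsum]. rewrite IHle by lia.
    replace (pr (S m)) with (pr m + 2) by (unfold pr; rewrite !mult_INR, (S_INR m); replace (INR 2) with 2 by (simpl; ring); ring).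
    rewrite <- ee_2 by auto.
    replace (pr m * pr m - INR k ^ 2) with (-4 * (INR m * INR (k - m))).
    2: { unfold pr. rewrite minus_INR by lia. rewrite mult_INR. simpl INR. ring. }
    replace (S m - 1)%nat with m by lia.
    rewrite <- (fcoef_rel m) by lia. ring.
Qed.

Definition J s := ee (INR k) s * Phi k (s ^ 2).
Definition J1 s := ee (INR k) s * (INR k / s * Phi k (s ^ 2) + 2 * s * Phi1 k (s ^ 2)).
Definition J2 s := ee (INR k) s * ((INR k * INR k - INR k) / s ^ 2 * Phi k (s ^ 2) + (4 * INR k + 2) * Phi1 k (s ^ 2) + 4 * s ^ 2 * Phi2 k (s ^ 2)).
Definition G s := ee (INR k) s * Chi k (s ^ 2).
Definition G1 s := ee (INR k) s * (INR k / s * Chi k (s ^ 2) + 2 * s * Chi1 k (s ^ 2)).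
Definition G2 s := ee (INR k) s * ((INR k * INR k - INR k) / s ^ 2 * Chi k (s ^ 2) + (4 * INR k + 2) * Chi1 k (s ^ 2) + 4 * s ^ 2 * Chi2 k (s ^ 2)).
Definition LJ s := ln s * J s.
Definition LJ1 s := J s / s + ln s * J1 s.
Definition LJ2 s := - J s / s ^ 2 + 2 * J1 s / s + ln s * J2 s.

Lemma J_ODE : ODE2 J J1 J2.
Proof. apply (ODE2_eg (INR k) (Phi k) (Phi1 k) (Phi2 k)). apply Entire2_PS, phi_CV. Qed.
Lemma G_ODE : ODE2 G G1 G2.
Proof. apply (ODE2_eg (INR k) (Chi k) (Chi1 k) (Chi2 k)). apply Entire2_PS, chi_CV; auto. Qed.
Lemma LJ_ODE : ODE2 LJ LJ1 LJ2.
Proof. apply (ODE2_ln J J1 J2). apply J_ODE. Qed.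

Definition cY1 := - / PI.
Definition cY2 := 2 / PI.
Definition cY4 := 2 * euler_gamma / PI.
Definition Ys s := cY1 * FS s + cY2 * LJ s + cY1 * G s + cY4 * J s.
Definition Ys1 s := cY1 * FS1 s + cY2 * LJ1 s + cY1 * G1 s + cY4 * J1 s.
Definition Ys2 s := cY1 * FS2 s + cY2 * LJ2 s + cY1 * G2 s + cY4 * J2 s.

Lemma Ys_ODE : ODE2 Ys Ys1 Ys2.
Proof. apply ODE2_lin4. apply FS_ODE. apply LJ_ODE. apply G_ODE. apply J_ODE. Qed.

Lemma Lv_J s : 0 < s -> Lv J J1 J2 s = 0.
Proof.
  intro hs. unfold Lv, J, J1, J2.
  transitivity (4 * s ^ 2 * ee (INR k) s * (s ^ 2 * Phi2 k (s ^ 2) + (INR k + 1) * Phi1 k (s ^ 2) + Phi k (s ^ 2))).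
  field. lra. rewrite ser_S1. ring. auto.
Qed.

Lemma Lv_G s : 0 < s -> Lv G G1 G2 s = 4 * ee (INR k) s * (INR k * Phi k (s ^ 2) + 2 * s ^ 2 * Phi1 k (s ^ 2) - / INR (fact (k - 1))).
Proof.
  intro hs. unfold Lv, G, G1, G2. rewrite <- ser_S2 by auto. field. lra.
Qed.

Lemma Lv_LJ s : 0 < s -> Lv LJ LJ1 LJ2 s = ln s * Lv J J1 J2 s + 2 * s * J1 s.
Proof. intro hs. unfold Lv, LJ, LJ1, LJ2. field. lra. Qed.

Lemma rsum_lin3 a b c f g h N : a * rsum f N + b * rsum g N + c * rsum h N = rsum (fun r => a * f r + b * g r + c * h r) N.
Proof. induction N; simpl. ring. rewrite <- IHN. ring. Qed.

Lemma Lv_FS s : 0 < s -> Lv FS FS1 FS2 s = 4 * / INR (fact (k - 1)) * ee (INR k) s.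
Proof.
  intro hs. unfold Lv, FS, FS1, FS2. rewrite rsum_lin3.
  rewrite (rsum_ext _ (fun r => fcoef k r * (ee (pr r) s * ((pr r * pr r - INR k ^ 2) + 4 * s ^ 2)))).
  2: { intros r _. field. lra. }
  rewrite FS_tele; auto.
  replace (pr k) with (INR k) by (unfold pr; rewrite mult_INR; simpl; ring).
  unfold fcoef. replace (k - (k - 1) - 1)%nat with 0%nat by lia. simpl. field.
  pose proof (INR_fact_pos (k - 1)). lra.
Qed.

Lemma Ys_bessel s : 0 < s -> s ^ 2 * Ys2 s + s * Ys1 s + (4 * s ^ 2 - INR k ^ 2) * Ys s = 0.
Proof.
  intro hs.
  transitivity (cY1 * Lv FS FS1 FS2 s + cY2 * Lv LJ LJ1 LJ2 s + cY1 * Lv G G1 G2 s + cY4 * Lv J J1 J2 s).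
  { unfold Lv, Ys, Ys1, Ys2. ring. }
  rewrite Lv_FS, Lv_LJ, Lv_G, Lv_J by auto. unfold J1, cY1, cY2.
  pose proof PI_RGT_0. pose proof (INR_fact_pos (k - 1)). field. repeat split; lra.
Qed.

End Ode.

Section Asym.
Variables y y1 y2 : R -> R.
Variable K : R.
Hypothesis Hy : forall z, 0 < z -> is_derive y z (y1 z) /\ is_derive y1 z (y2 z) /\
   z ^ 2 * y2 z + z * y1 z + (z ^ 2 - K) * y z = 0.

Definition qq z := (K - / 4) / z ^ 2.
Definition u z := sqrt z * y z.
Definition u1 z := y z / (2 * sqrt z) + sqrt z * y1 z.
Definition u2 z := (qq z - 1) * u z.

Lemma u_der z : 0 < z -> is_derive u z (u1 z).
Proof.
  intro hz. destruct (Hy z hz) as [H1 [H2 H3]]. unfold u, u1.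
  assert (ex_derive y z) by (eexists; eauto).
  auto_derive. split; auto.
  replace (Derive (fun x => y x) z) with (y1 z) by (symmetry; apply is_derive_unique; exact H1).
  field. apply Rgt_not_eq, sqrt_lt_R0; auto.
Qed.

Lemma u1_der z : 0 < z -> is_derive u1 z (u2 z).
Proof.
  intro hz. destruct (Hy z hz) as [H1 [H2 H3]]. unfold u1, u2, u, qq.
  assert (ex_derive y z) by (eexists; eauto).
  assert (ex_derive y1 z) by (eexists; eauto).
  assert (Ht : 0 < sqrt z) by (apply sqrt_lt_R0; auto).
  auto_derive. repeat split; auto; lra.
  replace (Derive (fun x => y x) z) with (y1 z) by (symmetry; apply is_derive_unique; exact H1).
  replace (Derive (fun x => y1 x) z) with (y2 z) by (symmetry; apply is_derive_unique; exact H2).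
  assert (Hz2 : z ^ 2 <> 0) by (apply pow_nonzero; lra).
  assert (E : y2 z = - (z * y1 z + (z ^ 2 - K) * y z) / z ^ 2).
  { apply (Rmult_eq_reg_l (z ^ 2)); auto. field_simplify; [lra|lra]. }
  rewrite E.
  assert (Hzt : z = sqrt z * sqrt z) by (rewrite sqrt_sqrt; lra).
  set (t := sqrt z) in *. rewrite Hzt. field. lra.
Qed.

Lemma nonincr (f df : R -> R) (a b : R) : a <= b -> (forall t, a <= t <= b -> is_derive f t (df t)) ->
  (forall t, a <= t <= b -> df t <= 0) -> f b <= f a.
Proof.
  intros hab Hd Hn.
  destruct (MVT_gen f a b df) as [c [Hc E]].
  - intros t Ht. rewrite Rmin_left, Rmax_right in Ht by lra. apply Hd; lra.
  - intros t Ht. rewrite Rmin_left, Rmax_right in Ht by lra. apply continuity_pt_filterlim.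
    apply (ex_derive_continuous f t). eexists; apply Hd; lra.
  - rewrite Rmin_left, Rmax_right in Hc by lra. pose proof (Hn c Hc). nra.
Qed.

Definition cc := Rabs (K - / 4).
Definition EE z := u z ^ 2 + u1 z ^ 2.
Definition Fe z := EE z * exp (cc / z).

Lemma qq_bound z : 0 < z -> Rabs (qq z) = cc / z ^ 2.
Proof.
  intro hz. unfold qq, cc. unfold Rdiv. rewrite Rabs_mult, Rabs_inv.
  rewrite (Rabs_right (z ^ 2)). auto. apply Rle_ge, pow_le; lra.
Qed.

Lemma Fe_der_nonpos z : 0 < z -> is_derive Fe z
   (exp (cc / z) * (2 * u z * u1 z + 2 * u1 z * u2 z - cc / z ^ 2 * EE z))
   /\ exp (cc / z) * (2 * u z * u1 z + 2 * u1 z * u2 z - cc / z ^ 2 * EE z) <= 0.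
Proof.
  intro hz. pose proof (u_der z hz) as Du. pose proof (u1_der z hz) as Du1. split.
  - unfold Fe, EE.
    assert (ex_derive u z) by (eexists; eauto). assert (ex_derive u1 z) by (eexists; eauto).
    auto_derive. repeat split; auto; lra.
    replace (Derive (fun x => u x) z) with (u1 z) by (symmetry; apply is_derive_unique; exact Du).
    replace (Derive (fun x => u1 x) z) with (u2 z) by (symmetry; apply is_derive_unique; exact Du1).
    unfold Rdiv. field. lra.
  - assert (0 < exp (cc / z)) by apply exp_pos.
    cut (2 * u z * u1 z + 2 * u1 z * u2 z - cc / z ^ 2 * EE z <= 0). { intro; nra. }
    unfold u2, EE.
    replace (2 * u z * u1 z + 2 * u1 z * ((qq z - 1) * u z)) with (qq z * (2 * u z * u1 z)) by ring.
    rewrite <- qq_bound by auto.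
    assert (Rabs (2 * u z * u1 z) <= u z ^ 2 + u1 z ^ 2).
    { apply Rabs_le. pose proof (pow2_ge_0 (u z - u1 z)). pose proof (pow2_ge_0 (u z + u1 z)). split; nra. }
    pose proof (Rle_abs (qq z * (2 * u z * u1 z))). rewrite Rabs_mult in H1.
    pose proof (Rabs_pos (qq z)). nra.
Qed.

Lemma EE_bound z0 : 0 < z0 -> forall z, z0 <= z -> EE z <= Fe z0.
Proof.
  intros h0 z hz.
  assert (Fe z <= Fe z0).
  { apply (nonincr Fe (fun z => exp (cc / z) * (2 * u z * u1 z + 2 * u1 z * u2 z - cc / z ^ 2 * EE z))); auto.
    intros t Ht; apply Fe_der_nonpos; lra. intros t Ht; apply Fe_der_nonpos; lra. }
  unfold Fe in *. assert (0 <= cc / z). { unfold cc. apply Rdiv_le_0_compat. apply Rabs_pos. lra. }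
  assert (1 <= exp (cc / z)). { rewrite <- exp_0. destruct H0. left; apply exp_increasing; auto. rewrite H0; lra. }
  assert (0 <= EE z) by (unfold EE; nra). nra.
Qed.

Definition aa z := u z * cos z - u1 z * sin z.
Definition aa1 z := - (qq z * u z) * sin z.

Lemma aa_der z : 0 < z -> is_derive aa z (aa1 z).
Proof.
  intro hz. pose proof (u_der z hz) as Du. pose proof (u1_der z hz) as Du1.
  unfold aa, aa1. assert (ex_derive u z) by (eexists; eauto). assert (ex_derive u1 z) by (eexists; eauto).
  auto_derive. repeat split; auto.
  replace (Derive (fun x => u x) z) with (u1 z) by (symmetry; apply is_derive_unique; exact Du).
  replace (Derive (fun x => u1 x) z) with (u2 z) by (symmetry; apply is_derive_unique; exact Du1).
  unfold u2. ring.
Qed.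

Lemma aa1_bound z0 : 0 < z0 -> forall z, z0 <= z -> Rabs (aa1 z) <= cc * (1 + Fe z0) / z ^ 2.
Proof.
  intros h0 z hz. pose proof (EE_bound z0 h0 z hz).
  unfold aa1. rewrite Rabs_mult, Rabs_Ropp, Rabs_mult, qq_bound by lra.
  assert (Rabs (u z) <= 1 + Fe z0).
  { unfold EE in H. destruct (Rle_dec (Rabs (u z)) 1). pose proof (pow2_ge_0 (u1 z)). nra.
    assert (E2 : Rabs (u z) * Rabs (u z) = u z ^ 2).
    { rewrite <- Rabs_mult. simpl. rewrite Rmult_1_r. apply Rabs_right. apply Rle_ge. nra. }
    pose proof (pow2_ge_0 (u1 z)). nra. }
  pose proof (Rabs_pos (sin z)). pose proof (Rabs_pos (u z)).
  assert (Rabs (sin z) <= 1) by (apply Rabs_le; apply SIN_bound).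
  assert (0 < z ^ 2) by (apply pow_lt; lra).
  assert (0 <= cc) by apply Rabs_pos.
  unfold Rdiv. assert (0 < / z ^ 2) by (apply Rinv_0_lt_compat; auto).
  assert (0 <= cc * / z ^ 2) by nra.
  assert (cc * / z ^ 2 * Rabs (u z) <= cc * / z ^ 2 * (1 + Fe z0)) by (apply Rmult_le_compat_l; auto).
  apply Rle_trans with (cc * / z ^ 2 * Rabs (u z)).
  rewrite <- (Rmult_1_r (cc * / z ^ 2 * Rabs (u z))) at 2. apply Rmult_le_compat_l; auto.
  apply Rmult_le_pos; auto.
  replace (cc * (1 + Fe z0) * / z ^ 2) with (cc * / z ^ 2 * (1 + Fe z0)) by ring. auto.
Qed.

Definition zm (m : nat) := 4 * PI * INR (S m).

Lemma zm_pos m : 0 < zm m.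
Proof. unfold zm. pose proof PI_RGT_0. pose proof (lt_0_INR (S m) ltac:(lia)). nra. Qed.

Lemma zm_ge m : zm 0 <= zm m.
Proof. unfold zm. pose proof PI_RGT_0. pose proof (le_INR 1 (S m) ltac:(lia)). simpl (INR 1) in *. nra. Qed.

Lemma zm_S m : zm (S m) = zm m + 4 * PI.
Proof. unfold zm. rewrite (S_INR (S m)). ring. Qed.

Lemma aa_zm m : aa (zm m) = u (zm m).
Proof.
  unfold aa, zm. replace (4 * PI * INR (S m)) with (0 + 2 * INR (2 * S m) * PI) by (rewrite mult_INR; simpl; ring).
  rewrite cos_period, sin_period, cos_0, sin_0. ring.
Qed.

Lemma u_asym : exists L D, forall m, Rabs (u (zm m) - L) <= D / zm m.
Proof.
  set (z0 := zm 0). assert (h0 : 0 < z0) by apply zm_pos.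
  set (D := cc * (1 + Fe z0)).
  assert (HD : 0 <= D). { unfold D. pose proof (Rabs_pos (K - /4)). assert (0 <= Fe z0).
    { unfold Fe, EE. pose proof (exp_pos (cc / z0)). nra. } unfold cc. nra. }
  set (gg := fun z => aa z + D / z). set (hh := fun z => aa z - D / z).
  assert (Hg : forall a b, z0 <= a <= b -> gg b <= gg a).
  { intros a b Hab. apply (nonincr gg (fun z => aa1 z - D / z ^ 2)). lra.
    - intros t Ht. unfold gg. assert (0 < t) by lra.
      apply (is_derive_plus aa (fun z => D / z)). apply aa_der; auto.
      auto_derive. lra. field. lra.
    - intros t Ht. pose proof (aa1_bound z0 h0 t ltac:(lra)). apply Rabs_le_between in H. fold D in H. lra. }
  assert (Hh : forall a b, z0 <= a <= b -> hh a <= hh b).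
  { intros a b Hab. cut (-1 * aa b + D / b <= -1 * aa a + D / a). unfold hh; lra.
    apply (nonincr (fun z => -1 * aa z + D / z) (fun z => - (aa1 z + D / z ^ 2))). lra.
    - intros t Ht. assert (0 < t) by lra.
      replace (- (aa1 t + D / t ^ 2)) with (plus (-1 * aa1 t) (- D / t ^ 2)) by (unfold plus; simpl; field; lra).
      apply (is_derive_plus (fun z => -1 * aa z) (fun z => D / z)). apply is_derive_scal, aa_der; auto.
      auto_derive. lra. field. lra.
    - intros t Ht. pose proof (aa1_bound z0 h0 t ltac:(lra)). apply Rabs_le_between in H. fold D in H. lra. }
  set (hs := fun m => hh (zm m)). set (gs := fun m => gg (zm m)).
  assert (hs_gr : Un_growing hs).
  { intro m. unfold hs. apply Hh. rewrite zm_S. split. apply zm_ge. pose proof PI_RGT_0. lra. }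
  assert (hs_le_gs : forall m, hs m <= gs m).
  { intro m. unfold hs, gs, hh, gg. pose proof (zm_pos m). assert (0 <= D / zm m) by (apply Rdiv_le_0_compat; lra). lra. }
  assert (gs_dec : forall m n, (m <= n)%nat -> gs n <= gs m).
  { intros m n Hmn. induction Hmn. lra. eapply Rle_trans; [|apply IHHmn]. unfold gs. apply Hg.
    rewrite zm_S. split. apply zm_ge. pose proof PI_RGT_0. lra. }
  destruct (growing_cv hs hs_gr) as [L HL].
  { exists (gs 0%nat). intros r [i ->]. eapply Rle_trans. apply hs_le_gs. apply gs_dec. lia. }
  exists L, D. intro m.
  pose proof (growing_ineq hs L hs_gr HL m) as H1.
  assert (H2 : L <= gs m).
  { destruct (Rle_dec L (gs m)); auto. exfalso.
    destruct (HL (L - gs m)) as [N HN]. lra.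
    specialize (HN (max N m) ltac:(lia)). unfold Rdist in HN. apply Rabs_def2 in HN.
    pose proof (hs_le_gs (max N m)). pose proof (gs_dec m (max N m) ltac:(lia)). lra. }
  unfold hs, gs, hh, gg in *. rewrite aa_zm in *.
  apply Rabs_le. lra.
Qed.

End Asym.

Lemma besselY_Ys k z : (1 <= k)%nat -> 0 < z -> besselY k z = Ys k (z / 2).
Proof.
  intros Hk hz. rewrite (besselY_eq k Hk). assert (hs : 0 < z / 2) by lra.
  unfold Ys, FS, LJ, G, J, cY1, cY2, cY4. rewrite (ee_pow k (z/2) hs).
  replace (rsum (fun r => fcoef k r * (ee (pr k r) (z / 2) * 1)) k) with (rsum (Fterm k z) k).
  2: { apply rsum_ext. intros r _. unfold Fterm, pr. rewrite ee_minus, !ee_pow by auto. field.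
       apply pow_nonzero; lra. }
  unfold Chi, Phi. field. pose proof PI_RGT_0; lra.
Qed.

Section Conn.
Variable k : nat.
Hypothesis Hk : (1 <= k)%nat.

Definition yz z := Ys k (z / 2).
Definition yz1 z := Ys1 k (z / 2) / 2.
Definition yz2 z := Ys2 k (z / 2) / 4.

Lemma yz_ODE : forall z, 0 < z -> is_derive yz z (yz1 z) /\ is_derive yz1 z (yz2 z) /\
   z ^ 2 * yz2 z + z * yz1 z + (z ^ 2 - INR k ^ 2) * yz z = 0.
Proof.
  intros z hz. assert (hs : 0 < z / 2) by lra. destruct (Ys_ODE k Hk (z / 2) hs) as [D1 D2].
  split; [|split].
  - unfold yz, yz1.
    replace (Ys1 k (z / 2) / 2) with (scal (/ 2) (Ys1 k (z / 2))) by (unfold scal; simpl; unfold mult; simpl; field).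
    apply (is_derive_comp (Ys k) (fun z => z / 2)). auto.
    auto_derive. auto. field.
  - unfold yz1, yz2.
    apply (is_derive_ext (fun z => / 2 * Ys1 k (z / 2))). intro t. change (/ 2 * Ys1 k (t / 2) = Ys1 k (t / 2) / 2). unfold Rdiv. ring.
    replace (Ys2 k (z / 2) / 4) with (/ 2 * scal (/ 2) (Ys2 k (z / 2))) by (unfold scal; simpl; unfold mult; simpl; field).
    apply is_derive_scal.
    apply (is_derive_comp (Ys1 k) (fun z => z / 2)). auto.
    auto_derive. auto. field.
  - unfold yz, yz1, yz2. pose proof (Ys_bessel k Hk (z / 2) hs).
    replace (z ^ 2 * (Ys2 k (z / 2) / 4) + z * (Ys1 k (z / 2) / 2) + (z ^ 2 - INR k ^ 2) * Ys k (z / 2))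
      with ((z / 2) ^ 2 * Ys2 k (z / 2) + z / 2 * Ys1 k (z / 2) + (4 * (z / 2) ^ 2 - INR k ^ 2) * Ys k (z / 2)) by field.
    auto.
Qed.

Lemma Y_asym : exists L D, forall m, Rabs (sqrt (zm m) * besselY k (zm m) - L) <= D / zm m.
Proof.
  destruct (u_asym yz yz1 yz2 (INR k ^ 2) yz_ODE) as [L [D H]].
  exists L, D. intro m. rewrite besselY_Ys; auto. apply H. apply zm_pos.
Qed.
End Conn.

Lemma prod_sum a b : 2 * sin a * cos b = sin (b + a) - sin (b - a).
Proof. rewrite sin_plus, sin_minus. ring. Qed.

Lemma cos_partial th N :
  2 * sin (th / 2) * sum_n (fun m => cos (INR (S m) * th)) N = sin ((INR N + 3 / 2) * th) - sin (th / 2).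
Proof.
  induction N.
  - rewrite sum_O. rewrite prod_sum. simpl INR.
    replace (1 * th + th / 2) with ((0 + 3 / 2) * th) by field.
    replace (1 * th - th / 2) with (th / 2) by field. reflexivity.
  - rewrite sum_Sn. change (plus ?a ?b) with (a + b). rewrite Rmult_plus_distr_l, IHN, prod_sum.
    rewrite !S_INR.
    replace ((INR N + 1 + 1) * th + th / 2) with ((INR N + 1 + 3 / 2) * th) by field.
    replace ((INR N + 1 + 1) * th - th / 2) with ((INR N + 3 / 2) * th) by field.
    ring.
Qed.

Lemma cos_partial_bound x : 0 < x < 1 -> forall N,
  Rabs (sum_n (fun m => cos (INR (S m) * (2 * PI * x))) N) <= / sin (PI * x).
Proof.
  intros hx N. pose proof PI_RGT_0.
  assert (Hs : 0 < sin (PI * x)) by (apply sin_gt_0; nra).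
  pose proof (cos_partial (2 * PI * x) N) as E.
  replace (2 * PI * x / 2) with (PI * x) in E by field.
  set (S := sum_n (fun m => cos (INR (S m) * (2 * PI * x))) N) in *.
  assert (Rabs (2 * sin (PI * x) * S) <= 2).
  { rewrite E. pose proof (SIN_bound ((INR N + 3 / 2) * (2 * PI * x))). pose proof (SIN_bound (PI * x)).
    apply Rabs_le. lra. }
  rewrite !Rabs_mult, (Rabs_right 2), (Rabs_right (sin _)) in H0 by lra.
  apply (Rmult_le_reg_l (sin (PI * x))); auto. rewrite Rinv_r by lra. lra.
Qed.

Lemma sqrt_zm_facts m : let t := sqrt (zm m) in let t' := sqrt (zm (S m)) in
  0 < t /\ 0 < t' /\ t' * t' = t * t + 4 * PI /\ 4 * PI <= t * t.
Proof.
  intros t t'. pose proof (zm_pos m). pose proof (zm_pos (S m)). pose proof (zm_ge m).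
  unfold t, t'. rewrite !sqrt_sqrt by lra. repeat split.
  apply sqrt_lt_R0; lra. apply sqrt_lt_R0; lra. rewrite zm_S. ring.
  assert (zm 0 = 4 * PI) by (unfold zm; simpl; ring). lra.
Qed.

Lemma inv_cube_le m : / (zm m * sqrt (zm m)) <= / sqrt (zm m) - / sqrt (zm (S m)).
Proof.
  destruct (sqrt_zm_facts m) as [Ht [Ht' [E1 E2]]].
  set (t := sqrt (zm m)) in *. set (t' := sqrt (zm (S m))) in *.
  replace (zm m) with (t * t) by (unfold t; rewrite sqrt_sqrt; [auto| pose proof (zm_pos m); lra]).
  pose proof PI_RGT_0. pose proof PI2_1.
  assert (t' <= 2 * t) by nra.
  assert (t < t') by nra.
  replace (/ t - / t') with ((t' - t) / (t * t')) by (field; lra).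
  apply inv_le_div. apply Rmult_lt_0_compat; [nra|lra]. nra.
  apply (Rmult_le_reg_r (t + t')). lra.
  replace ((t' - t) * (t * t * t) * (t + t')) with (((t' - t) * (t + t')) * (t * t * t)) by ring.
  replace ((t' - t) * (t + t')) with (4 * PI) by nra.
  assert (t' * (t + t') <= 6 * (t * t)) by nra.
  assert (0 < t * t) by nra.
  replace (t * t' * (t + t')) with (t * (t' * (t + t'))) by ring.
  replace (4 * PI * (t * t * t)) with (t * (4 * PI * (t * t))) by ring.
  apply Rmult_le_compat_l. lra. nra.
Qed.

Lemma a_lim : is_lim_seq (fun m => / sqrt (zm m)) 0.
Proof.
  assert (H1 : is_lim_seq (fun m => / zm m) 0).
  { apply (is_lim_seq_ext (fun m => / (4 * PI) * / INR (S m))).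
    - intro m. unfold zm. pose proof PI_RGT_0. pose proof (lt_0_INR (S m) ltac:(lia)). field. lra.
    - replace (Finite 0) with (Rbar_mult (/ (4 * PI)) (Finite 0)) by (simpl; f_equal; ring).
      apply is_lim_seq_scal_l. apply lim_inv_S. }
  apply (is_lim_seq_ext (fun m => sqrt (/ zm m))). intro; apply sqrt_inv.
  replace (Finite 0) with (Finite (sqrt 0)) by (rewrite sqrt_0; reflexivity).
  eapply filterlim_comp. exact H1.
  apply continuity_pt_filterlim. apply continuity_pt_sqrt. lra.
Qed.

Lemma a_decr m : / sqrt (zm (S m)) <= / sqrt (zm m).
Proof.
  destruct (sqrt_zm_facts m) as [Ht [Ht' [E1 E2]]].
  apply Rinv_le_contravar; auto. pose proof PI_RGT_0. nra.
Qed.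

Lemma Yseries_conv n x : (1 <= n)%nat -> 0 < x < 1 ->
  exists S1, infinite_sum (fun m => besselY (2 * n) (4 * PI * INR (S m)) * cos (2 * PI * INR (S m) * x)) S1.
Proof.
  intros hn hx. destruct (Y_asym (2 * n) ltac:(lia)) as [L [D HLD]].
  set (a := fun m => / sqrt (zm m)). set (b := fun m => cos (INR (S m) * (2 * PI * x))).
  assert (HD : 0 <= D).
  { pose proof (HLD 0%nat). pose proof (Rabs_pos (sqrt (zm 0) * besselY (2 * n) (zm 0) - L)).
    pose proof (zm_pos 0). assert (0 <= D / zm 0) by lra.
    apply (Rmult_le_reg_r (/ zm 0)). apply Rinv_0_lt_compat; auto. rewrite Rmult_0_l. auto. }
  assert (Hab : ex_series (fun m => a m * b m)).
  { apply (partial_summation_R a b).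
    - exists (/ sin (PI * x)). intro N. apply cos_partial_bound; auto.
    - apply a_lim.
    - apply (ex_series_cmp _ (fun m => a m - a (S m))).
      + intro m. unfold norm; simpl; unfold abs, minus, plus, opp; simpl. rewrite Rabs_Rabsolu.
        rewrite Rabs_left1. unfold a. lra. pose proof (a_decr m). unfold a. lra.
      + apply telescope_ex. apply a_lim. }
  assert (Herr : ex_series (fun m => (sqrt (zm m) * besselY (2 * n) (zm m) - L) * a m * b m)).
  { apply (ex_series_cmp _ (fun m => D * (a m - a (S m)))).
    - intro m. rewrite !Rabs_mult. pose proof (HLD m). pose proof (inv_cube_le m).
      pose proof (zm_pos m). assert (Hsq : 0 < sqrt (zm m)) by (apply sqrt_lt_R0; auto).
      assert (0 < a m) by (unfold a; apply Rinv_0_lt_compat; auto).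
      rewrite (Rabs_right (a m)) by lra.
      assert (Rabs (b m) <= 1) by (apply Rabs_le; apply COS_bound).
      pose proof (Rabs_pos (b m)). pose proof (Rabs_pos (sqrt (zm m) * besselY (2 * n) (zm m) - L)).
      apply Rle_trans with (D / zm m * a m).
      + apply Rle_trans with (Rabs (sqrt (zm m) * besselY (2 * n) (zm m) - L) * a m).
        rewrite <- (Rmult_1_r (_ * a m)) at 2. apply Rmult_le_compat_l; auto. nra.
        apply Rmult_le_compat_r; lra.
      + replace (D / zm m * a m) with (D * / (zm m * sqrt (zm m))).
        apply Rmult_le_compat_l; auto.
        unfold a. field. lra.
    - apply (ex_series_scal_l D (fun m => a m - a (S m))). apply telescope_ex, a_lim. }
  assert (Hall : ex_series (fun m => besselY (2 * n) (4 * PI * INR (S m)) * cos (2 * PI * INR (S m) * x))).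
  { eapply ex_series_ext. 2: apply (ex_series_plus (fun m => L * (a m * b m)) _ (ex_series_scal_l L _ Hab) Herr).
    intro m. change (plus ?p ?q) with (p + q). cbv beta. unfold a, b. pose proof (zm_pos m).
    assert (Hsq : 0 < sqrt (zm m)) by (apply sqrt_lt_R0; auto). unfold zm.
    replace (INR (S m) * (2 * PI * x)) with (2 * PI * INR (S m) * x) by ring.
    unfold zm in Hsq. match goal with |- ?A = ?B => change (@eq R A B) end. field. lra. }
  exists (Series (fun m => besselY (2 * n) (4 * PI * INR (S m)) * cos (2 * PI * INR (S m) * x))).
  apply ex_series_infinite; auto.
Qed.


Theorem lemma3p1 (n : nat) (x : R) (hn : (1 <= n)%nat) (hx0 : 0 < x) (hx1 : x < 1) :
  exists S1 S2 : R,
    infinite_sum (fun m => besselY (2 * n) (4 * PI * INR (S m))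
                           * cos (2 * PI * INR (S m) * x)) S1 /\
    infinite_sum (fun m =>
        (2 * (euler_gamma + ln (2 * PI * INR (S m))) * besselJ (2 * n) (4 * PI * INR (S m))
         + P_fun (2 * n) (4 * PI * INR (S m))
         - 2 * Q_fun (2 * n) (4 * PI * INR (S m)))
        * cos (2 * PI * INR (S m) * x)) S2 /\
    infinite_sum (fun m => A_term n x (S m))
      ((-1) ^ n * PI * S1 + (-1) ^ (n + 1) * S2).
Proof.
  apply main_from_Y; auto. apply Yseries_conv; auto.
Qed.
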